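(* Let $P,PA$ be labelings, $c$ a command and $\rho_1,\rho_2,\mu_1,\mu_2$ states. Assume $\mathtt b\notin\mathrm{UsedVars}(c)$, $\rho_1(\mathtt b)=\rho_2(\mathtt b)=0$, $|a|_{\mu_1}>0$ and $|a|_{\mu_2}>0$ for every array $a$, $P;PA\vdash_{ct}c$, $\rho_1\sim_P\rho_2$ and $\mu_1\sim_{PA}\mu_2$. Then $\langle\mathrm{SiSLH}_P(c),\rho_1,\mu_1,\mathtt{false}\rangle\approx_s\langle\mathrm{SiSLH}_P(c),\rho_2,\mu_2,\mathtt{false}\rangle$.
   Context: Language AWhile: scalar variables $X\in\mathcal V$, array names $a\in\mathcal A$. Arithmetic expressions $e::=n\ (n\in\mathbb N)\mid X\mid \mathrm{op}_{\mathbb N}(e,\dots,e)\mid be\,?\,e_1:e_2$; boolean expressions $be::=\mathtt{true}\mid\mathtt{false}\mid\mathrm{cmp}(e,e)\mid\mathrm{op}_{\mathbb B}(be,\dots,be)$; commands $c::=\mathtt{skip}\mid X:=e\mid c_1;c_2\mid \mathtt{if}\ be\ \mathtt{then}\ c_1\ \mathtt{else}\ c_2\mid\mathtt{while}\ be\ \mathtt{do}\ c\mid X\leftarrow a[e]\mid a[e]\leftarrow e'$. A scalar state is $\rho:\mathcal V\to\mathbb N$; an array state $\mu$ gives each array $a$ a size $|a|_\mu$ and values $\mu(a)[i]$ for $0\le i<|a|_\mu$. $[\![\cdot]\!]_\rho$ is the usual pure evaluation. $\mathrm{UsedVars}(c)$ is the set of scalar variables occurring in $c$; $\mathtt b$ is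 a reserved scalar variable. Speculative semantics: configurations $\langle c,\rho,\mu,\beta\rangle$ with boolean misspeculation flag $\beta$; steps $\xrightarrow[d]{o}$ with optional observation $o\in\{\mathrm{branch}(v),\mathrm{read}(a,i),\mathrm{write}(a,i)\}$ and optional directive $d\in\{\mathit{step},\mathit{force},\mathrm{load}(a',j),\mathrm{store}(a',j)\}$. $X:=e\to\mathtt{skip}$ updating $\rho[X\mapsto[\![e]\!]_\rho]$; if $c_1$ steps to $c_1'$ then $c_1;c_2$ steps to $c_1';c_2$ with the same label; $\mathtt{skip};c\to c$; $\mathtt{while}\ be\ \mathtt{do}\ c\to\mathtt{if}\ be\ \mathtt{then}\ (c;\mathtt{while}\ be\ \mathtt{do}\ c)\ \mathtt{else}\ \mathtt{skip}$ (these keep $\beta$, have no observation/directive except as inherited). Conditional: with $\mathit{step}$ go to branch $v=[\![be]\!]_\rho$, flag unchanged; with $\mathit{force}$ go to branch $\neg v$ and set $\beta:=\mathtt{true}$; both observe $\mathrm{branch}(v)$. $X\leftarrow a[ie]$ with $\mathit{step}$: requires $i=[\![ie]\!]_\rho<|a|_\mu$, sets $X$ to $\mu(a)[i]$; with $\mathrm{load}(a',j)$: requires $\beta=\mathtt{true}$, $i\ge|a|_\mu$, $j<|a'|_\mu$, sets $X$ to $\mu(a')[j]$; both observe $\mathrm{read}(a,i)$. $a[ie]\leftarrow e$ with $\mathit{step}$: requires $i<|a|_\mu$, sets $\mu[a[i]\mapsto[\![e]\!]_\rho]$; with $\mathrm{store}(a',j)$: requires $\beta=\mathtt{true}$, $i\ge|a|_\mu$,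 $j<|a'|_\mu$, sets $\mu[a'[j]\mapsto[\![e]\!]_\rho]$; both observe $\mathrm{write}(a,i)$. Multi-step $\xrightarrow[D]{O}{}^*$ collects directives $D$ and observations $O$. $\langle c_1,\rho_1,\mu_1,\beta_1\rangle\approx_s\langle c_2,\rho_2,\mu_2,\beta_2\rangle$ iff for all $D,O_1,O_2$, if both configurations multi-step with directives $D$ producing $O_1$ resp. $O_2$, then $O_1=O_2$. Labels: $\mathtt{true}$=public, $\mathtt{false}$=secret; $\ell_1\sqsubseteq\ell_2$ iff $\ell_2=\mathtt{true}\Rightarrow\ell_1=\mathtt{true}$. $P:\mathcal V\to$ labels, $PA:\mathcal A\to$ labels; $P(e)$, $P(be)$ are public iff all scalar variables occurring are public. $\rho_1\sim_P\rho_2$ iff they agree on all $X$ with $P(X)=\mathtt{true}$; $\mu_1\sim_{PA}\mu_2$ iff they agree on sizes and contents of all $a$ with $PA(a)=\mathtt{true}$. CCT typing $P;PA\vdash_{ct}c$: $\mathtt{skip}$; $X:=e$ if $P(e)\sqsubseteq P(X)$; $c_1;c_2$ if both typed; $\mathtt{if}\ be\ \mathtt{then}\ c_1\ \mathtt{else}\ c_2$ if $P(be)=\mathtt{true}$ and both branches typed; $\mathtt{while}\ be\ \mathtt{do}\ c$ if $P(be)=\mathtt{true}$ and $c$ typed; $X\leftarrow a[i]$ if $P(i)=\mathtt{true}$ and $PA(a)\sqsubseteq P(X)$; $a[i]\leftarrow e$ if $P(i)=\mathtt{true}$ and $P(e)\sqsubseteq PA(a)$. Index-SLH recipe with parameters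 $B(be)$, $R(X,i)$, $W(i,e)$: $[\![\mathtt{skip}]\!]=\mathtt{skip}$; $[\![X:=e]\!]=X:=e$; $[\![c_1;c_2]\!]=[\![c_1]\!];[\![c_2]\!]$; $[\![\mathtt{if}\ be\ \mathtt{then}\ c_1\ \mathtt{else}\ c_2]\!]=\mathtt{if}\ B(be)\ \mathtt{then}\ (\mathtt b:=B(be)\,?\,\mathtt b:1;[\![c_1]\!])\ \mathtt{else}\ (\mathtt b:=B(be)\,?\,1:\mathtt b;[\![c_2]\!])$; $[\![\mathtt{while}\ be\ \mathtt{do}\ c]\!]=(\mathtt{while}\ B(be)\ \mathtt{do}\ (\mathtt b:=B(be)\,?\,\mathtt b:1;[\![c]\!]));\ \mathtt b:=B(be)\,?\,1:\mathtt b$; $[\![X\leftarrow a[i]]\!]=X\leftarrow a[R(X,i)]$; $[\![a[i]\leftarrow e]\!]=a[W(i,e)]\leftarrow e$. With $m(i)=(\mathtt b==1)\,?\,0:i$, $\mathrm{SiSLH}_P$ is the instance with $B(be)=be$; $R(X,i)=m(i)$ if $P(X)=\mathtt{true}$, else $i$; $W(i,e)=m(i)$ if $P(e)=\mathtt{false}$, else $i$. *)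

(* Defs.v *)
From Stdlib Require Import String List Arith Bool.
Import ListNotations.

Definition var := string.
Definition arr := string.

Inductive aexp : Type :=
  | ANum (n : nat)
  | AId (x : var)
  | AOp (f : list nat -> nat) (es : list aexp)
  | ACTIf (be : bexp) (e1 e2 : aexp)
with bexp : Type :=
  | BTrue
  | BFalse
  | BCmp (f : nat -> nat -> bool) (e1 e2 : aexp)
  | BOp (f : list bool -> bool) (bs : list bexp).

Inductive com : Type :=
  | Skip
  | Asgn (x : var) (e : aexp)
  | Seq (c1 c2 : com)
  | If (be : bexp) (c1 c2 : com)
  | While (be : bexp) (c : com)
  | ARead (x : var) (a : arr) (i : aexp)
  | AWrite (a : arr) (i : aexp) (e : aexp).

Definition reg := var -> nat.
Definition mem := arr -> list nat.

Fixpoint aeval (r : reg) (e : aexp) {struct e} : nat :=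
  match e with
  | ANum n => n
  | AId x => r x
  | AOp f es => f (map (aeval r) es)
  | ACTIf be e1 e2 => if beval r be then aeval r e1 else aeval r e2
  end
with beval (r : reg) (b : bexp) {struct b} : bool :=
  match b with
  | BTrue => true
  | BFalse => false
  | BCmp f e1 e2 => f (aeval r e1) (aeval r e2)
  | BOp f bs => f (map (beval r) bs)
  end.

Fixpoint avars (e : aexp) {struct e} : list var :=
  match e with
  | ANum _ => []
  | AId x => [x]
  | AOp _ es => flat_map avars es
  | ACTIf be e1 e2 => bvars be ++ avars e1 ++ avars e2
  end
with bvars (b : bexp) {struct b} : list var :=
  match b with
  | BTrue | BFalse => []
  | BCmp _ e1 e2 => avars e1 ++ avars e2
  | BOp _ bs => flat_map bvars bs
  end.

Fixpoint UsedVars (c : com) : list var :=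
  match c with
  | Skip => []
  | Asgn x e => x :: avars e
  | Seq c1 c2 => UsedVars c1 ++ UsedVars c2
  | If be c1 c2 => bvars be ++ UsedVars c1 ++ UsedVars c2
  | While be c => bvars be ++ UsedVars c
  | ARead x a i => x :: avars i
  | AWrite a i e => avars i ++ avars e
  end.

(* reserved misspeculation-mask variable b *)
Definition bvar : var := "b"%string.

Definition upd (r : reg) (x : var) (v : nat) : reg :=
  fun y => if String.eqb y x then v else r y.

Definition mupd (m : mem) (a : arr) (i v : nat) : mem :=
  fun a' => if String.eqb a' a then
              (firstn i (m a) ++ [v] ++ skipn (S i) (m a))%list
            else m a'.

Definition msize (m : mem) (a : arr) : nat := length (m a).
Definition mget (m : mem) (a : arr) (i : nat) : nat := nth i (m a) 0.

Inductive obs : Type :=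
  | OBranch (v : bool)
  | ORead (a : arr) (i : nat)
  | OWrite (a : arr) (i : nat).

Inductive dir : Type :=
  | DStep
  | DForce
  | DLoad (a : arr) (j : nat)
  | DStore (a : arr) (j : nat).

Definition opt_list {A} (o : option A) : list A :=
  match o with Some x => [x] | None => [] end.

(* configurations <c, rho, mu, beta>; spec_step c r m b o d c' r' m' b'
   with optional observation o and optional directive d *)
Inductive spec_step : com -> reg -> mem -> bool -> option obs -> option dir ->
                      com -> reg -> mem -> bool -> Prop :=
  | SS_Asgn : forall x e r m b,
      spec_step (Asgn x e) r m b None None Skip (upd r x (aeval r e)) m b
  | SS_Seq : forall c1 c1' c2 r m b o d r' m' b',
      spec_step c1 r m b o d c1' r' m' b' ->
      spec_step (Seq c1 c2) r m b o d (Seq c1' c2) r' m' b'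
  | SS_SeqSkip : forall c r m b,
      spec_step (Seq Skip c) r m b None None c r m b
  | SS_While : forall be c r m b,
      spec_step (While be c) r m b None None
                (If be (Seq c (While be c)) Skip) r m b
  | SS_IfStep : forall be c1 c2 r m b,
      spec_step (If be c1 c2) r m b (Some (OBranch (beval r be))) (Some DStep)
                (if beval r be then c1 else c2) r m b
  | SS_IfForce : forall be c1 c2 r m b,
      spec_step (If be c1 c2) r m b (Some (OBranch (beval r be))) (Some DForce)
                (if negb (beval r be) then c1 else c2) r m true
  | SS_ReadStep : forall x a ie r m b i,
      i = aeval r ie -> i < msize m a ->
      spec_step (ARead x a ie) r m b (Some (ORead a i)) (Some DStep)
                Skip (upd r x (mget m a i)) m b
  | SS_ReadLoad : forall x a ie r m i a' j,
      i = aeval r ie -> msize m a <= i -> j < msize m a' ->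
      spec_step (ARead x a ie) r m true (Some (ORead a i)) (Some (DLoad a' j))
                Skip (upd r x (mget m a' j)) m true
  | SS_WriteStep : forall a ie e r m b i,
      i = aeval r ie -> i < msize m a ->
      spec_step (AWrite a ie e) r m b (Some (OWrite a i)) (Some DStep)
                Skip r (mupd m a i (aeval r e)) b
  | SS_WriteStore : forall a ie e r m i a' j,
      i = aeval r ie -> msize m a <= i -> j < msize m a' ->
      spec_step (AWrite a ie e) r m true (Some (OWrite a i)) (Some (DStore a' j))
                Skip r (mupd m a' j (aeval r e)) true.

Inductive multi_spec : com -> reg -> mem -> bool -> list dir -> list obs ->
                       com -> reg -> mem -> bool -> Prop :=
  | MS_Refl : forall c r m b, multi_spec c r m b [] [] c r m b
  | MS_Step : forall c r m b o d c' r' m' b' D O c'' r'' m'' b'',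
      spec_step c r m b o d c' r' m' b' ->
      multi_spec c' r' m' b' D O c'' r'' m'' b'' ->
      multi_spec c r m b (opt_list d ++ D) (opt_list o ++ O) c'' r'' m'' b''.

Definition spec_obs_equiv (c1 : com) (r1 : reg) (m1 : mem) (b1 : bool)
                          (c2 : com) (r2 : reg) (m2 : mem) (b2 : bool) : Prop :=
  forall D O1 O2 c1' r1' m1' b1' c2' r2' m2' b2',
    multi_spec c1 r1 m1 b1 D O1 c1' r1' m1' b1' ->
    multi_spec c2 r2 m2 b2 D O2 c2' r2' m2' b2' ->
    O1 = O2.

(* labels: true = public, false = secret *)
Definition label := bool.
Definition label_le (l1 l2 : label) : Prop := l2 = true -> l1 = true.

Definition pub_vars := var -> label.
Definition pub_arrs := arr -> label.

Definition label_of_aexp (P : pub_vars) (e : aexp) : label := forallb P (avars e).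
Definition label_of_bexp (P : pub_vars) (be : bexp) : label := forallb P (bvars be).

Definition pub_equiv (P : pub_vars) (r1 r2 : reg) : Prop :=
  forall x, P x = true -> r1 x = r2 x.

Definition pub_equiv_mem (PA : pub_arrs) (m1 m2 : mem) : Prop :=
  forall a, PA a = true -> m1 a = m2 a.

Inductive ct_well_typed (P : pub_vars) (PA : pub_arrs) : com -> Prop :=
  | CT_Skip : ct_well_typed P PA Skip
  | CT_Asgn : forall x e,
      label_le (label_of_aexp P e) (P x) -> ct_well_typed P PA (Asgn x e)
  | CT_Seq : forall c1 c2,
      ct_well_typed P PA c1 -> ct_well_typed P PA c2 ->
      ct_well_typed P PA (Seq c1 c2)
  | CT_If : forall be c1 c2,
      label_of_bexp P be = true ->
      ct_well_typed P PA c1 -> ct_well_typed P PA c2 ->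
      ct_well_typed P PA (If be c1 c2)
  | CT_While : forall be c,
      label_of_bexp P be = true -> ct_well_typed P PA c ->
      ct_well_typed P PA (While be c)
  | CT_ARead : forall x a i,
      label_of_aexp P i = true -> label_le (PA a) (P x) ->
      ct_well_typed P PA (ARead x a i)
  | CT_AWrite : forall a i e,
      label_of_aexp P i = true -> label_le (label_of_aexp P e) (PA a) ->
      ct_well_typed P PA (AWrite a i e).

Definition mask (i : aexp) : aexp :=
  ACTIf (BCmp Nat.eqb (AId bvar) (ANum 1)) (ANum 0) i.

(* Index-SLH recipe, instantiated as SiSLH_P:
   B(be) = be; R(X,i) = m(i) if P X public else i;
   W(i,e) = m(i) if P(e) secret else i. *)
Fixpoint sislh (P : pub_vars) (c : com) : com :=
  match c with
  | Skip => Skip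
  | Asgn x e => Asgn x e
  | Seq c1 c2 => Seq (sislh P c1) (sislh P c2)
  | If be c1 c2 =>
      If be (Seq (Asgn bvar (ACTIf be (AId bvar) (ANum 1))) (sislh P c1))
            (Seq (Asgn bvar (ACTIf be (ANum 1) (AId bvar))) (sislh P c2))
  | While be c1 =>
      Seq (While be (Seq (Asgn bvar (ACTIf be (AId bvar) (ANum 1))) (sislh P c1)))
          (Asgn bvar (ACTIf be (ANum 1) (AId bvar)))
  | ARead x a i => ARead x a (if P x then mask i else i)
  | AWrite a i e => AWrite a (if label_of_aexp P e then i else mask i) e
  end.

(* Main.v *)
Require Import Defs.
From Stdlib Require Import String List Arith Bool Lia.
Import ListNotations.

Fixpoint aeval_agree (r1 r2 : reg) (e : aexp) {struct e} :
  (forall x, In x (avars e) -> r1 x = r2 x) -> aeval r1 e = aeval r2 e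
with beval_agree (r1 r2 : reg) (b : bexp) {struct b} :
  (forall x, In x (bvars b) -> r1 x = r2 x) -> beval r1 b = beval r2 b.
Proof.
- destruct e as [n|x|f es|be e1 e2]; simpl; intros H.
  + reflexivity.
  + apply H; left; reflexivity.
  + f_equal. revert H. generalize es. fix go 1. intros [|a l] H; simpl in *.
    * reflexivity.
    * f_equal.
      -- apply aeval_agree; intros; apply H; apply in_or_app; auto.
      -- apply go; intros; apply H; apply in_or_app; auto.
  + rewrite (beval_agree r1 r2 be), (aeval_agree r1 r2 e1), (aeval_agree r1 r2 e2);
      [reflexivity | | |]; intros; apply H; repeat (apply in_or_app; try (left; assumption); right); auto.
- destruct b as [| |f e1 e2|f bs]; simpl; intros H.
  + reflexivity.
  + reflexivity.
  + rewrite (aeval_agree r1 r2 e1), (aeval_agree r1 r2 e2); [reflexivity| |];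
      intros; apply H; apply in_or_app; auto.
  + f_equal. revert H. generalize bs. fix go 1. intros [|a l] H; simpl in *.
    * reflexivity.
    * f_equal.
      -- apply beval_agree; intros; apply H; apply in_or_app; auto.
      -- apply go; intros; apply H; apply in_or_app; auto.
Qed.

Lemma aeval_lab P r1 r2 e : pub_equiv P r1 r2 -> label_of_aexp P e = true -> aeval r1 e = aeval r2 e.
Proof.
  intros H L. apply aeval_agree. intros x Hx. apply H.
  unfold label_of_aexp in L. rewrite forallb_forall in L. auto.
Qed.

Lemma beval_lab P r1 r2 e : pub_equiv P r1 r2 -> label_of_bexp P e = true -> beval r1 e = beval r2 e.
Proof.
  intros H L. apply beval_agree. intros x Hx. apply H.
  unfold label_of_bexp in L. rewrite forallb_forall in L. auto.
Qed.
Notation MaskT be := (Asgn bvar (ACTIf be (AId bvar) (ANum 1))).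
Notation MaskF be := (Asgn bvar (ACTIf be (ANum 1) (AId bvar))).
Notation Wh be c := (While be (Seq (MaskT be) c)).

Inductive gd (P : pub_vars) (PA : pub_arrs) : com -> Prop :=
  | G_Skip : gd P PA Skip
  | G_Asgn x e : x <> bvar -> label_le (label_of_aexp P e) (P x) -> gd P PA (Asgn x e)
  | G_MaskT be : label_of_bexp P be = true -> gd P PA (MaskT be)
  | G_MaskF be : label_of_bexp P be = true -> gd P PA (MaskF be)
  | G_Seq c1 c2 : gd P PA c1 -> gd P PA c2 -> gd P PA (Seq c1 c2)
  | G_If be c1 c2 : label_of_bexp P be = true -> gd P PA c1 -> gd P PA c2 ->
      gd P PA (If be (Seq (MaskT be) c1) (Seq (MaskF be) c2))
  | G_Loop be c : label_of_bexp P be = true -> gd P PA c ->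
      gd P PA (Seq (Wh be c) (MaskF be))
  | G_LoopU be c : label_of_bexp P be = true -> gd P PA c ->
      gd P PA (Seq (If be (Seq (Seq (MaskT be) c) (Wh be c)) Skip) (MaskF be))
  | G_LoopB be c c' : label_of_bexp P be = true -> gd P PA c -> gd P PA c' ->
      gd P PA (Seq (Seq c' (Wh be c)) (MaskF be))
  | G_Read x a i : x <> bvar -> label_of_aexp P i = true -> label_le (PA a) (P x) ->
      gd P PA (ARead x a (if P x then mask i else i))
  | G_Write a i e : label_of_aexp P i = true -> label_le (label_of_aexp P e) (PA a) ->
      gd P PA (AWrite a (if label_of_aexp P e then i else mask i) e).

Inductive hp (r : reg) : com -> Prop :=
  | HP_T be : beval r be = false -> hp r (MaskT be)
  | HP_F be : beval r be = true -> hp r (MaskF be)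
  | HP_Skip c : hp r c -> hp r (Seq Skip c)
  | HP_Seq c1 c2 : hp r c1 -> hp r (Seq c1 c2).

Definition inv (c : com) (r : reg) (b : bool) : Prop := b = true -> r bvar = 1 \/ hp r c.

Definition spos (m : mem) := forall a, 0 < msize m a.

Definition Rel P PA c r1 m1 r2 m2 b :=
  inv c r1 b /\ inv c r2 b /\ pub_equiv P r1 r2 /\ r1 bvar = r2 bvar /\
  pub_equiv_mem PA m1 m2 /\ spos m1 /\ spos m2.

Lemma mupd_len (l : list nat) i v : i < length l -> length (firstn i l ++ [v] ++ skipn (S i) l) = length l.
Proof. intros H. rewrite !length_app, length_firstn, length_skipn. simpl. lia. Qed.

Lemma spos_mupd m a i v : spos m -> i < msize m a -> spos (mupd m a i v).
Proof.
  intros H Hi a0. unfold msize, mupd in *. destruct (String.eqb a0 a) eqn:E.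
  - apply String.eqb_eq in E; subst. rewrite mupd_len by assumption. apply H.
  - apply H.
Qed.

Lemma upd_b r x v : x <> bvar -> upd r x v bvar = r bvar.
Proof. intros H. unfold upd. destruct (String.eqb bvar x) eqn:E; auto.
  apply String.eqb_eq in E. congruence. Qed.

Lemma upd_same r x v : upd r x v x = v.
Proof. unfold upd. rewrite String.eqb_refl. reflexivity. Qed.

Lemma pub_upd P r1 r2 x v1 v2 : pub_equiv P r1 r2 -> (P x = true -> v1 = v2) ->
  pub_equiv P (upd r1 x v1) (upd r2 x v2).
Proof.
  intros H Hv y Hy. unfold upd. destruct (String.eqb y x) eqn:E.
  - apply String.eqb_eq in E; subst. auto.
  - auto.
Qed.

Lemma od c r m b o d c' r' m' b' : spec_step c r m b o d c' r' m' b' -> (o = None <-> d = None).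
Proof. induction 1; split; intros; try discriminate; auto; apply IHspec_step; auto. Qed.

Lemma dir_det c r1 m1 b1 o1 d1 c1 r1' m1' b1' r2 m2 b2 o2 d2 c2 r2' m2' b2' :
  spec_step c r1 m1 b1 o1 d1 c1 r1' m1' b1' -> spec_step c r2 m2 b2 o2 d2 c2 r2' m2' b2' ->
  (d1 = None <-> d2 = None).
Proof.
  intros H; revert r2 m2 b2 o2 d2 c2 r2' m2' b2'.
  induction H; intros r2_ m2_ b2_ o2_ d2_ c2_ r2'_ m2'_ b2'_ H2; inversion H2; subst;
    try (split; intros; congruence); try (match goal with H : spec_step Skip _ _ _ _ _ _ _ _ _ |- _ => inversion H end).
  eauto.
Qed.
Lemma hp_nothead r c : hp r c -> match c with If _ _ _ | While _ _ | ARead _ _ _ | AWrite _ _ _ | Skip => False | _ => True end.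
Proof. destruct 1; exact I. Qed.

Ltac noth I := let Hbt := fresh in intros Hbt; destruct (I Hbt) as [?|Hh];
  [ | exfalso; apply hp_nothead in Hh; exact Hh].

Lemma step_nskip c r m b o d c' r' m' b' : spec_step c r m b o d c' r' m' b' -> c <> Skip.
Proof. destruct 1; discriminate. Qed.

Lemma inv_seq_l c1 c2 r b : inv (Seq c1 c2) r b -> c1 <> Skip -> inv c1 r b.
Proof. intros H N Hb. destruct (H Hb) as [?|Hh]; auto. inversion Hh; subst; auto. congruence. Qed.

Lemma inv_seq_r c1 c2 r b : inv c1 r b -> inv (Seq c1 c2) r b.
Proof. intros H Hb. destruct (H Hb) as [?|Hh]; auto. right; constructor; auto. Qed.

Lemma inv_skip c r b : inv (Seq Skip c) r b -> inv c r b.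
Proof. intros H Hb. destruct (H Hb) as [?|Hh]; auto. inversion Hh; subst; auto.
  apply hp_nothead in H1; destruct H1. Qed.

Lemma inv_seqhead c1 c2 c' r b : inv (Seq c1 c2) r b ->
  match c1 with If _ _ _ | While _ _ => True | _ => False end -> inv c' r b.
Proof. intros H N Hb. destruct (H Hb) as [?|Hh]; auto. inversion Hh; subst. destruct N.
  apply hp_nothead in H1. exfalso; destruct c1; simpl in *; tauto. Qed.

Lemma inv_seqseqhead c2 c3 c' r b : inv (Seq (Seq Skip c2) c3) r b ->
  match c2 with If _ _ _ | While _ _ => True | _ => False end -> inv c' r b.
Proof. intros H N Hb. destruct (H Hb) as [?|Hh]; auto. inversion Hh; subst.
  inversion H1; subst; apply hp_nothead in H2; exfalso; destruct c2; simpl in *; tauto. Qed.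

Lemma inv_seqseq_l c1 c2 c3 r b : inv (Seq (Seq c1 c2) c3) r b -> c1 <> Skip -> inv c1 r b.
Proof. intros H N. apply inv_seq_l with c2; auto. apply inv_seq_l with c3; auto. discriminate. Qed.

Lemma pem_mupd PA m1 m2 a i v1 v2 : pub_equiv_mem PA m1 m2 -> (PA a = true -> v1 = v2) ->
  pub_equiv_mem PA (mupd m1 a i v1) (mupd m2 a i v2).
Proof.
  intros H Hv a0 Ha0. unfold mupd. destruct (String.eqb a0 a) eqn:E.
  - apply String.eqb_eq in E; subst. rewrite (H a Ha0), (Hv Ha0). reflexivity.
  - auto.
Qed.
Lemma lock P PA c : gd P PA c -> forall r1 m1 r2 m2 b o1 o2 d c1 c2 r1' m1' b1 r2' m2' b2,
  Rel P PA c r1 m1 r2 m2 b ->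
  spec_step c r1 m1 b o1 d c1 r1' m1' b1 -> spec_step c r2 m2 b o2 d c2 r2' m2' b2 ->
  o1 = o2 /\ c1 = c2 /\ b1 = b2 /\ gd P PA c1 /\ Rel P PA c1 r1' m1' r2' m2' b1.
Proof.
  induction 1; intros r1 m1 r2 m2 b o1 o2 d c1_ c2_ r1' m1' b1 r2' m2' b2 HR HS1 HS2;
    destruct HR as (I1 & I2 & Hr & Hb & Hm & S1 & S2).
  - inversion HS1.
  -
    inversion HS1; subst; inversion HS2; subst.
    repeat split; auto using G_Skip.
    + intros Hbt; left; rewrite upd_b by auto; destruct (I1 Hbt) as [?|Hh]; auto;
        inversion Hh; subst; congruence.
    + intros Hbt; left; rewrite upd_b by auto; destruct (I2 Hbt) as [?|Hh]; auto;
        inversion Hh; subst; congruence.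
    + apply pub_upd; auto; intros Px; apply aeval_lab with P; auto.
    + rewrite !upd_b; auto.
  -
    inversion HS1; subst; inversion HS2; subst.
    assert (Hbe : beval r1 be = beval r2 be) by (apply beval_lab with P; auto).
    repeat split; auto using G_Skip.
    + intros Hbt; left; rewrite upd_same; simpl.
      destruct (I1 Hbt) as [E|Hh]; [destruct (beval r1 be); auto|].
      inversion Hh; subst. match goal with H : beval _ _ = false |- _ => rewrite H end. auto.
    + intros Hbt; left; rewrite upd_same; simpl.
      destruct (I2 Hbt) as [E|Hh]; [destruct (beval r2 be); auto|].
      inversion Hh; subst. match goal with H : beval _ _ = false |- _ => rewrite H end. auto.
    + apply pub_upd; auto; intros _; simpl; rewrite Hbe, Hb; auto.
    + rewrite !upd_same; simpl; rewrite Hbe, Hb; auto.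
  -
    inversion HS1; subst; inversion HS2; subst.
    assert (Hbe : beval r1 be = beval r2 be) by (apply beval_lab with P; auto).
    repeat split; auto using G_Skip.
    + intros Hbt; left; rewrite upd_same; simpl.
      destruct (I1 Hbt) as [E|Hh]; [destruct (beval r1 be); auto|].
      inversion Hh; subst. match goal with H : beval _ _ = true |- _ => rewrite H end. auto.
    + intros Hbt; left; rewrite upd_same; simpl.
      destruct (I2 Hbt) as [E|Hh]; [destruct (beval r2 be); auto|].
      inversion Hh; subst. match goal with H : beval _ _ = true |- _ => rewrite H end. auto.
    + apply pub_upd; auto; intros _; simpl; rewrite Hbe, Hb; auto.
    + rewrite !upd_same; simpl; rewrite Hbe, Hb; auto.
  -
    inversion HS1; subst.
    + inversion HS2; subst; [| match goal with H: spec_step Skip _ _ _ _ _ _ _ _ _ |- _ => inversion H end].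
      assert (RR : Rel P PA c1 r1 m1 r2 m2 b)
        by (repeat split; auto; eapply inv_seq_l; eauto; eapply step_nskip; eauto).
      match goal with A : spec_step c1 r1 _ _ _ _ _ _ _ _, B : spec_step c1 r2 _ _ _ _ _ _ _ _ |- _ =>
        destruct (IHgd1 _ _ _ _ _ _ _ _ _ _ _ _ _ _ _ _ RR A B) as (Eo & Ec & Eb & G' & J1 & J2 & R'') end.
      subst. repeat split; auto using G_Seq, inv_seq_r. all: try tauto.
    + inversion HS2; subst; [ match goal with H: spec_step Skip _ _ _ _ _ _ _ _ _ |- _ => inversion H end |].
      repeat split; eauto using inv_skip.
  -
    assert (Hbe : beval r1 be = beval r2 be) by (apply beval_lab with P; auto).
    destruct (beval r2 be) eqn:E2; rename Hbe into E1;
    inversion HS1; subst; inversion HS2; subst; rewrite ?E1, ?E2 in *; simpl;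
      repeat split; auto using G_Seq, G_MaskT, G_MaskF;
      try (noth I1; solve [auto]); try (noth I2; solve [auto]);
      try (intros _; right; constructor; constructor; congruence).
  -
    inversion HS1; subst;
      match goal with H : spec_step (While _ _) _ _ _ _ _ _ _ _ _ |- _ => inversion H; subst; clear H end;
    inversion HS2; subst;
      match goal with H : spec_step (While _ _) _ _ _ _ _ _ _ _ _ |- _ => inversion H; subst; clear H end.
    repeat split; auto using G_LoopU; eapply inv_seqhead; eauto; exact I.
  -
    assert (Hbe : beval r1 be = beval r2 be) by (apply beval_lab with P; auto).
    destruct (beval r2 be) eqn:E2; rename Hbe into E1;
    inversion HS1; subst;
      match goal with H : spec_step (If _ _ _) _ _ _ _ _ _ _ _ _ |- _ => inversion H; subst; clear H end;
    inversion HS2; subst;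
      match goal with H : spec_step (If _ _ _) _ _ _ _ _ _ _ _ _ |- _ => inversion H; subst; clear H end;
      rewrite ?E1, ?E2 in *; simpl;
      repeat split; auto using G_Seq, G_MaskT, G_MaskF, G_Skip, G_LoopB;
      try (eapply inv_seqhead; eauto; exact I);
      try (intros _; right; repeat constructor; congruence).
  -
    inversion HS1; subst;
      match goal with H : spec_step (Seq _ (While _ _)) _ _ _ _ _ _ _ _ _ |- _ => inversion H; subst; clear H end;
    inversion HS2; subst;
      match goal with H : spec_step (Seq _ (While _ _)) _ _ _ _ _ _ _ _ _ |- _ => inversion H; subst; clear H end;
      try match goal with H: spec_step Skip _ _ _ _ _ _ _ _ _ |- _ => inversion H end.
    + assert (RR : Rel P PA c' r1 m1 r2 m2 b).
      { repeat split; auto; eapply inv_seqseq_l; eauto; eapply step_nskip; eauto. }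
      match goal with A : spec_step c' r1 _ _ _ _ _ _ _ _, B : spec_step c' r2 _ _ _ _ _ _ _ _ |- _ =>
        destruct (IHgd2 _ _ _ _ _ _ _ _ _ _ _ _ _ _ _ _ RR A B) as (Eo & Ec & Eb & G' & J1 & J2 & R'') end.
      subst. repeat split; auto using G_LoopB, inv_seq_r. all: try tauto.
    + repeat split; auto using G_Loop; eapply inv_seqseqhead; eauto; exact I.
  -
    assert (Hi : aeval r1 (if P x then mask i else i) = aeval r2 (if P x then mask i else i)).
    { destruct (P x); simpl; rewrite ?Hb, (aeval_lab P r1 r2 i); auto. }
    assert (Hz : r1 bvar = 1 -> P x = true -> aeval r1 (if P x then mask i else i) = 0).
    { intros E Px; rewrite Px; simpl; rewrite E; reflexivity. }
    assert (Hb1 : b = true -> r1 bvar = 1).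
    { intros Hbt; destruct (I1 Hbt) as [?|Hh]; [auto | inversion Hh]. }
    assert (Hb2 : b = true -> r2 bvar = 1).
    { intros Hbt; destruct (I2 Hbt) as [?|Hh]; [auto | inversion Hh]. }
    inversion HS1; subst; inversion HS2; subst.
    + repeat split; auto using G_Skip; try congruence.
      * intros Hbt; left; rewrite upd_b; auto.
      * intros Hbt; left; rewrite upd_b; auto.
      * apply pub_upd; auto; intros Px. unfold mget. rewrite Hi, (Hm a (H1 Px)). reflexivity.
      * rewrite !upd_b; auto.
    + destruct (P x) eqn:Px.
      * exfalso. specialize (Hz (Hb1 eq_refl) eq_refl).
        match goal with H : msize _ a <= aeval _ (mask i) |- _ => rewrite Hz in H end.
        specialize (S1 a). lia.
      * repeat split; auto using G_Skip; try congruence.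
        -- intros Hbt; left; rewrite upd_b; auto.
        -- intros Hbt; left; rewrite upd_b; auto.
        -- apply pub_upd; auto; intros; congruence.
        -- rewrite !upd_b; auto.
  -
    assert (Hi : aeval r1 (if label_of_aexp P e then i else mask i) = aeval r2 (if label_of_aexp P e then i else mask i)).
    { destruct (label_of_aexp P e); simpl; rewrite ?Hb, (aeval_lab P r1 r2 i); auto. }
    assert (Hz : r1 bvar = 1 -> label_of_aexp P e = false -> aeval r1 (if label_of_aexp P e then i else mask i) = 0).
    { intros E Le; rewrite Le; simpl; rewrite E; reflexivity. }
    assert (Hb1 : b = true -> r1 bvar = 1).
    { intros Hbt; destruct (I1 Hbt) as [?|Hh]; [auto | inversion Hh]. }
    assert (Hb2 : b = true -> r2 bvar = 1).
    { intros Hbt; destruct (I2 Hbt) as [?|Hh]; [auto | inversion Hh]. }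
    inversion HS1; subst; inversion HS2; subst.
    + repeat split; auto using G_Skip; try congruence;
      try (intro; left; solve [auto]);
      try (rewrite Hi; apply pem_mupd; auto; intros Pa; apply aeval_lab with P; auto);
      try (apply spos_mupd; auto; rewrite <- Hi; auto).
    + destruct (label_of_aexp P e) eqn:Le.
      * repeat split; auto using G_Skip; try congruence;
        try (intro; left; solve [auto]);
        try (apply pem_mupd; auto; intros Pa; apply aeval_lab with P; auto);
        try (apply spos_mupd; auto).
      * exfalso. specialize (Hz (Hb1 eq_refl) eq_refl).
        match goal with H : msize _ a <= aeval _ (mask i) |- _ => rewrite Hz in H end.
        specialize (S1 a). lia.
Qed.

Lemma multi_nil c r m b O c' r' m' b' : multi_spec c r m b [] O c' r' m' b' -> O = [].
Proof.
  intros H. remember (@nil dir) as D eqn:ED. revert ED.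
  induction H; intros ED; auto.
  first [apply app_eq_nil in ED | apply eq_sym, app_eq_nil in ED]. destruct ED as [Ed ED].
  destruct d; try discriminate. apply od in H. destruct H as [_ H']. rewrite H' by auto.
  simpl. auto.
Qed.

Lemma main_multi P PA c r1 m1 b D O1 c1 r1' m1' b1 :
  multi_spec c r1 m1 b D O1 c1 r1' m1' b1 ->
  forall r2 m2 O2 c2 r2' m2' b2,
  multi_spec c r2 m2 b D O2 c2 r2' m2' b2 ->
  gd P PA c -> Rel P PA c r1 m1 r2 m2 b -> O1 = O2.
Proof.
  induction 1 as [c r m b | c r m b o d c' r' m' b' D O c'' r'' m'' b'' Hs Hm IH];
    intros r2 m2 O2 c2 r2' m2' b2 H2 G R.
  - symmetry. eapply multi_nil; eauto.
  - inversion H2 as [ | c_ r_ m_ b_ o2 d2 c2' r2'' m2'' b2'' D2 O2' c2'' r2''' m2''' b2''' Hs2 Hm2];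
      subst.
    + match goal with H : [] = _ ++ _ |- _ => symmetry in H; apply app_eq_nil in H; destruct H as [Ed ED]
                    | H : _ ++ _ = [] |- _ => apply app_eq_nil in H; destruct H as [Ed ED] end. subst.
      destruct d; try discriminate. apply od in Hs. destruct Hs as [_ Ho]. rewrite Ho by auto.
      simpl. eapply multi_nil; eauto.
    + assert (Hd : d = d2 /\ D = D2).
      { pose proof (dir_det _ _ _ _ _ _ _ _ _ _ _ _ _ _ _ _ _ _ _ Hs Hs2) as Hdd.
        match goal with H : opt_list _ ++ _ = opt_list _ ++ _ |- _ => rename H into HD end.
        destruct d, d2; simpl in HD; inversion HD; subst; auto.
        - destruct Hdd as [_ X]; specialize (X eq_refl); discriminate.
        - destruct Hdd as [X _]; specialize (X eq_refl); discriminate. }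
      destruct Hd; subst.
      destruct (lock P PA c G _ _ _ _ _ _ _ _ _ _ _ _ _ _ _ _ R Hs Hs2) as (Eo & Ec & Eb & G' & R').
      subst. f_equal. eapply IH; eauto.
Qed.

Lemma sislh_gd P PA c : ct_well_typed P PA c -> ~ In bvar (UsedVars c) -> gd P PA (sislh P c).
Proof.
  induction 1; simpl; intros N; rewrite ?in_app_iff in N.
  - constructor.
  - constructor; auto; intro E; apply N; left; auto.
  - constructor; [apply IHct_well_typed1 | apply IHct_well_typed2]; tauto.
  - constructor; auto; [apply IHct_well_typed1 | apply IHct_well_typed2]; tauto.
  - constructor; auto; apply IHct_well_typed; tauto.
  - constructor; auto; intro E; apply N; left; auto.
  - constructor; auto.
Qed.

Theorem theorem3p1 (P : pub_vars) (PA : pub_arrs) (c : com)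
    (r1 r2 : reg) (m1 m2 : mem) :
  ~ In bvar (UsedVars c) ->
  r1 bvar = 0 -> r2 bvar = 0 ->
  (forall a, 0 < msize m1 a) -> (forall a, 0 < msize m2 a) ->
  ct_well_typed P PA c ->
  pub_equiv P r1 r2 ->
  pub_equiv_mem PA m1 m2 ->
  spec_obs_equiv (sislh P c) r1 m1 false (sislh P c) r2 m2 false.
Proof.
  intros N B1 B2 S1 S2 T Hr Hm.
  unfold spec_obs_equiv. intros D O1 O2 c1' r1' m1' b1' c2' r2' m2' b2' H1 H2.
  eapply (main_multi P PA); eauto.
  - apply sislh_gd; auto.
  - repeat split; try discriminate; auto. congruence.
Qed.
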